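(* Let $n,k$ be positive integers with $k(k+1)\mid n$, and let $\mathcal C$ be the code of Construction B (see context). Then $\mathcal C$ is a uniform $\bigl(n,(k-1+\frac1k)n,k,k+1\bigr)$-BAC over $\mathbb{F}_q$ in which every bucket has length $(k-1+\frac1k)\frac{n}{k+1}$.
   Context: Fix a finite field $\mathbb{F}_q$; $[n]=\{1,\dots,n\}$. An $(n,N,k,m)$-batch array code (BAC) over $\mathbb{F}_q$ is an $\mathbb{F}_q$-linear map $\mathcal{C}:\mathbf x=(x_1,\dots,x_n)\in\mathbb{F}_q^n\mapsto(\mathbf c_1,\dots,\mathbf c_m)$ with buckets $\mathbf c_\ell\in\mathbb{F}_q^{N_\ell}$, $N_\ell\ge1$ independent of $\mathbf x$, $\sum_\ell N_\ell=N$, such that for every multiset $\{\{i_1,\dots,i_k\}\}$ of elements of $[n]$ there is a partition of $[m]$ into $k$ sets $R_1,\dots,R_k$ such that for each $j\in[k]$, $x_{i_j}$ is an $\mathbb{F}_q$-linear combination of values $f_\ell(\mathbf c_\ell)$, $\ell\in R_j$, for some linear functionals $f_\ell:\mathbb{F}_q^{N_\ell}\to\mathbb{F}_q$ (independent of $\mathbf x$). It is uniform if all $N_\ell$ are equal. Code $\mathcal C_0$: for $n_0$ with $k\mid n_0$ and $\mathbf z=(z_1,\dots,z_{n_0})$, let $P_\ell=\{(\ell-1)\frac{n_0}{k}+b:1\le b\le \frac{n_0}{k}\}$ for $\ell\in[k]$, let $\mathcal C_0(\mathbf z)=(\mathbf d_1,\dots,\mathbf d_{k+1})$ where $\mathbf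 d_\ell$ ($\ell\in[k]$) is the vector of entries $z_i$, $i\in[n_0]\setminus P_\ell$, and $\mathbf d_{k+1}=\sum_{t=0}^{k-1}(z_{t\frac{n_0}{k}+1},\dots,z_{t\frac{n_0}{k}+\frac{n_0}{k}})$. Construction B: set $n_0=\frac{n}{k+1}$; for $\mathbf x\in\mathbb{F}_q^n$ and $j\in[k+1]$ let $\mathbf x_j=(x_{(j-1)n_0+1},\dots,x_{jn_0})$ and $\mathcal C_0(\mathbf x_j)=(\mathbf c_{j,1},\dots,\mathbf c_{j,k+1})$; define $\mathcal C(\mathbf x)=(\mathbf c_1,\dots,\mathbf c_{k+1})$ with $\mathbf c_\ell=(\mathbf c_{1,\ell},\mathbf c_{2,\ell-1},\dots,\mathbf c_{k+1,\ell-k})$, second indices taken modulo $k+1$ with representatives in $[k+1]$. *)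

(* Defs.v *)
From HB Require Import structures.
From mathcomp Require Import all_boot all_order all_algebra.

Set Implicit Arguments.
Unset Strict Implicit.
Unset Printing Implicit Defensive.

Import GRing.Theory.
Local Open Scope ring_scope.

(* Conventions: all indices are 0-based (paper index i corresponds to i-1 here).
   Vectors x in F_q^n are row vectors 'rV[F]_n; buckets are sequences over F
   whose length must not depend on x. *)

Definition rv2seq (F : Type) (n : nat) (x : 'rV[F]_n) : seq F :=
  [seq x ord0 i | i <- enum 'I_n].

(* A multiset {{i_1,..,i_k}} is given by an (ordered)
   k-tuple req : 'I_k -> 'I_n; the partition R_1..R_k of [m] is given by the
   block-assignment map R : 'I_m -> 'I_k (blocks nonempty); a linear functional
   f_l on F^(Nl l) is c |-> sum_i w l i * c_i. *)
Definition is_BAC (F : fieldType) (n N k m : nat) (Nl : 'I_m -> nat)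
    (C : 'I_m -> 'rV[F]_n -> seq F) : Prop :=
  [/\ (forall l x, size (C l x) = Nl l),
      (forall l, 0 < Nl l)%N,
      (\sum_(l < m) Nl l)%N = N,
      (forall l (a : F) (x y : 'rV[F]_n) (i : nat),
          (C l (a *: x + y))`_i = a * (C l x)`_i + (C l y)`_i)
    & forall req : 'I_k -> 'I_n,
        exists R : 'I_m -> 'I_k,
          (forall j, exists l, R l = j) /\
          exists (a : 'I_m -> F) (w : 'I_m -> nat -> F),
            forall (x : 'rV[F]_n) (j : 'I_k),
              x ord0 (req j) =
              \sum_(l < m | R l == j) a l * \sum_(i < Nl l) w l i * (C l x)`_i ].

Definition is_uniform_BAC (F : fieldType) (n N k m : nat) (Nl : 'I_m -> nat)
    (C : 'I_m -> 'rV[F]_n -> seq F) : Prop :=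
  is_BAC N k Nl C /\ forall l l', Nl l = Nl l'.

(* P_l = [l*b, (l+1)*b) with b = n0/k.  Bucket l < k: entries z_i, i notin P_l,
   in increasing order of i; bucket k: sum of the k blocks of z. *)
Definition C0 (F : fieldType) (k n0 : nat) (z : seq F) (l : nat) : seq F :=
  let b := (n0 %/ k)%N in
  if (l < k)%N then
    [seq z`_i | i <- iota 0 n0 & ~~ ((l * b <= i) && (i < l.+1 * b))%N]
  else
    [seq \sum_(t < k) z`_(t * b + j)%N | j <- iota 0 b].

(* Construction B: n0 = n/(k+1), x_j the j-th block of length n0 (0-based j),
   bucket l = (c_{0,l}, c_{1,l-1}, ..., c_{k,l-k}) with second indices mod k+1. *)
Definition constructionB (F : fieldType) (n k : nat) (l : 'I_k.+1)
    (x : 'rV[F]_n) : seq F :=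
  let n0 := (n %/ k.+1)%N in
  let xs := rv2seq x in
  let xj (j : nat) := [seq xs`_(j * n0 + i)%N | i <- iota 0 n0] in
  flatten [seq C0 k n0 (xj j) ((l + k.+1 - j) %% k.+1)%N | j <- iota 0 k.+1].

(* Main.v *)
Require Import Defs.
From HB Require Import structures.
From mathcomp Require Import all_boot all_order all_algebra.
From mathcomp Require Import zify ring.
Import GRing.Theory.
Local Open Scope ring_scope.
Set Implicit Arguments.
Unset Strict Implicit.

Lemma comb_assign (K : nat) (P : 'I_K -> {set 'I_K.+1} -> Prop)
  (good : 'I_K -> 'I_K.+1 -> bool) :
  (0 < K)%N ->
  (forall j (S S' : {set 'I_K.+1}), P j S -> S \subset S' -> P j S') ->
  (forall j l, good j l -> P j [set l]) ->
  (forall j l1 l2, l1 != l2 -> P j [set l1; l2]) ->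
  (forall j, exists b1 b2, forall l, ~~ good j l -> l = b1 \/ l = b2) ->
  exists R : 'I_K.+1 -> 'I_K, (forall j, exists l, R l = j) /\
     forall j, P j [set l | R l == j].
Proof.
move=> K0 mono single pair bad.
have main : forall s, (s <= K)%N -> forall B : {set 'I_K.+1}, (s < #|B|)%N ->
  exists g : 'I_K.+1 -> nat, forall j : 'I_K, (j < s)%N ->
    (exists2 l, l \in B & g l = j) /\ P j [set l in B | g l == j].
  elim=> [|s IH] sK B sB.
    by exists (fun _ => 0%N) => j.
  pose j0 : 'I_K := Ordinal sK.
  case: (pickP (fun b => (b \in B) && good j0 b)) => [b /andP [bB gb]|nogood].
    have sK' : (s <= K)%N by apply: ltnW.
    have sB' : (s < #|B :\ b|)%N.
      by move: sB; rewrite (cardsD1 b) bB add1n ltnS.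
    have [g' Hg'] := IH sK' (B :\ b) sB'.
    exists (fun l => if l == b then s else g' l) => j js.
    case: (ltngtP j s) => [jlt|jgt|jeq].
    - have [[l lB gl] Pj] := Hg' j jlt.
      split.
        exists l; first by move: lB; rewrite !inE => /andP [].
        by move: lB; rewrite !inE => /andP [/negbTE -> _].
      suff -> : [set l in B | (if l == b then s else g' l) == j] =
                [set l in B :\ b | g' l == j] by [].
      apply/setP => y; rewrite !inE.
      case: (eqVneq y b) => [->|lb] //=.
      by rewrite andbC; case: eqP => // E; move: jlt; rewrite -E ltnn.
    - by move: js; rewrite ltnS leqNgt jgt.
    - have -> : j = j0 by apply: val_inj.
      split; first by exists b; rewrite // eqxx.
      apply: (mono _ _ _ (single _ _ gb)).
      apply/subsetP => y; rewrite !inE => /eqP ->; rewrite bB eqxx /=; exact: eqxx.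
  have [b1 [b2 Hb]] := bad j0.
  have sub : B \subset [set b1; b2].
    apply/subsetP => l lB; rewrite !inE.
    have := nogood l; rewrite lB /= => /negbT /Hb [] ->; by rewrite eqxx ?orbT.
  have c2 := subset_leq_card sub; rewrite cards2 in c2.
  have s0 : s = 0%N.
    by move: sB c2; case: (b1 != b2) => /=; lia.
  have nb : b1 != b2 by move: sB c2; rewrite s0; case: (b1 != b2) => // H1 H2; have := leq_trans H1 H2.
  have BE : B = [set b1; b2].
    apply/eqP; rewrite eqEcard sub cards2 nb /=.
    by move: sB; rewrite s0.
  exists (fun _ => 0%N) => j js.
  have j0E : nat_of_ord j = 0%N by move: js; rewrite s0; case: (nat_of_ord j).
  split.
    by exists b1; rewrite // BE !inE eqxx.
  suff -> : [set l in B | 0%N == j] = [set b1; b2] by apply: pair.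
  by apply/setP => l; rewrite !inE j0E eqxx andbT BE !inE.
have cB : (K < #|[set: 'I_K.+1]|)%N by rewrite cardsT card_ord.
have [g Hg] := main K (leqnn K) [set: 'I_K.+1] cB.
pose j0 : 'I_K := Ordinal K0.
exists (fun l => insubd j0 (g l)); split.
  move=> j; have [[l _ gl] _] := Hg j (ltn_ord j).
  by exists l; apply: val_inj; rewrite val_insubd gl ltn_ord.
move=> j; have [_ Pj] := Hg j (ltn_ord j).
apply: (mono _ _ _ Pj); apply/subsetP => l; rewrite !inE => /eqP gl.
by apply/eqP/val_inj; rewrite val_insubd gl ltn_ord.
Qed.

Definition Comb (F : fieldType) (T : Type) (E : seq (T -> F)) (v : T -> F) :=
  exists w : nat -> F, forall x, v x = \sum_(i < size E) w i * nth (fun _ => 0) E i x.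
Definition found (F : fieldType) (T : Type) (E : seq (T -> F)) (v : T -> F) :=
  exists2 i, (i < size E)%N & forall x, nth (fun _ => 0) E i x = v x.

Lemma nth_map_app (F : fieldType) (T : Type) (E : seq (T -> F)) x i :
  nth 0 [seq e x | e <- E] i = nth (fun _ => 0) E i x.
Proof. by elim: E i => [|e E IH] [|i] //=. Qed.

Lemma found_Comb (F : fieldType) (T : Type) (E : seq (T -> F)) v :
  found E v -> Comb E v.
Proof.
case=> i iE Hi; exists (fun j => if j == i then 1 else 0) => x.
rewrite (bigD1 (Ordinal iE)) //= eqxx mul1r big1 ?addr0 ?Hi // => j.
by rewrite -val_eqE /= => /negbTE ->; rewrite mul0r.
Qed.

Lemma Comb_lin (F : fieldType) (T : Type) (E : seq (T -> F)) v1 v2 v (a : F) :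
  Comb E v1 -> Comb E v2 -> (forall x, v x = v1 x + a * v2 x) -> Comb E v.
Proof.
case=> w1 H1 [w2 H2] H; exists (fun i => w1 i + a * w2 i) => x.
rewrite H H1 H2 mulr_sumr -big_split /=; apply: eq_bigr => i _.
by rewrite mulrDl mulrA.
Qed.

Lemma Comb_sum (F : fieldType) (T : Type) (E : seq (T -> F)) (I : Type)
  (r : seq I) (P : pred I) (f : I -> T -> F) :
  (forall t, P t -> Comb E (f t)) ->
  Comb E (fun x => \big[+%R/0]_(t <- r | P t) f t x).
Proof.
move=> H; elim: r => [|t r IH].
  by exists (fun _ => 0) => x; rewrite big_nil big1 // => i _; rewrite mul0r.
case Pt: (P t).
  apply: (Comb_lin (a := 1) (H t Pt) IH) => x.
  by rewrite big_cons Pt mul1r.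
by apply: (Comb_lin (a := 0) IH IH) => x; rewrite big_cons Pt mul0r addr0.
Qed.

Lemma found_cat_l (F : fieldType) (T : Type) (E1 E2 : seq (T -> F)) v :
  found E1 v -> found (E1 ++ E2) v.
Proof.
case=> i iE Hi; exists i; first by rewrite size_cat ltn_addr.
by move=> x; rewrite nth_cat iE.
Qed.

Lemma found_cat_r (F : fieldType) (T : Type) (E1 E2 : seq (T -> F)) v :
  found E2 v -> found (E1 ++ E2) v.
Proof.
case=> i iE Hi; exists (size E1 + i)%N; first by rewrite size_cat ltn_add2l.
by move=> x; rewrite nth_cat ltnNge leq_addr /= addKn.
Qed.

Lemma found_map (F : fieldType) (T A : Type) (f : A -> T -> F) (r : seq A) a0 i v :
  (i < size r)%N -> (forall x, f (nth a0 r i) x = v x) -> found (map f r) v.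
Proof.
move=> ir H; exists i; first by rewrite size_map.
by move=> x; rewrite (nth_map a0).
Qed.

Definition lin (F : fieldType) (n : nat) (f : 'rV[F]_n -> F) :=
  forall a x y, f (a *: x + y) = a * f x + f y.
Definition linN (F : fieldType) (e : (nat -> F) -> F) :=
  forall a g1 g2 g, (forall i, g i = a * g1 i + g2 i) -> e g = a * e g1 + e g2.
Definition allLin (F : fieldType) (n : nat) (E : seq ('rV[F]_n -> F)) :=
  forall i, lin (nth (fun _ => 0) E i).

Lemma lin0 (F : fieldType) (n : nat) : lin (fun _ : 'rV[F]_n => 0).
Proof. by move=> a x y; rewrite mulr0 addr0. Qed.

Lemma allLin_cat (F : fieldType) (n : nat) (E1 E2 : seq ('rV[F]_n -> F)) :
  allLin E1 -> allLin E2 -> allLin (E1 ++ E2).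
Proof. by move=> H1 H2 i; rewrite nth_cat; case: ifP. Qed.

Lemma allLin_flatten (F : fieldType) (n : nat) (A : Type) (f : A -> seq ('rV[F]_n -> F)) r :
  (forall a, allLin (f a)) -> allLin (flatten (map f r)).
Proof.
move=> H; elim: r => [|a r IH] /=; first by move=> i; rewrite nth_nil; apply: lin0.
exact: allLin_cat.
Qed.

Lemma allLin_map (F : fieldType) (n : nat) (E : seq ((nat -> F) -> F))
  (G : 'rV[F]_n -> nat -> F) :
  (forall i, linN (nth (fun _ => 0) E i)) ->
  (forall a x y u, G (a *: x + y) u = a * G x u + G y u) ->
  allLin [seq (fun x => e (G x)) | e <- E].
Proof.
move=> HE HG i; case: (ltnP i (size E)) => iE.
  rewrite (nth_map (fun _ => 0)) // => a x y; exact: HE.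
by rewrite nth_default ?size_map //; apply: lin0.
Qed.

Definition E0 (F : fieldType) (k n0 : nat) (l : nat) : seq ((nat -> F) -> F) :=
  let b := (n0 %/ k)%N in
  if (l < k)%N then
    [seq (fun g : nat -> F => g i) | i <- iota 0 n0 & ~~ ((l * b <= i) && (i < l.+1 * b))%N]
  else [seq (fun g : nat -> F => \sum_(t < k) g (t * b + j)%N) | j <- iota 0 b].

Lemma C0E (F : fieldType) k n0 (z : seq F) l :
  C0 k n0 z l = [seq e (fun u => z`_u) | e <- E0 F k n0 l].
Proof. by rewrite /C0 /E0; case: ifP => _; rewrite -map_comp. Qed.

Definition xjf (F : fieldType) n n0 (x : 'rV[F]_n) j : nat -> F :=
  fun u => nth 0 [seq (rv2seq x)`_(j * n0 + i)%N | i <- iota 0 n0] u.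

Definition EB (F : fieldType) n k n0 (l : nat) : seq ('rV[F]_n -> F) :=
  flatten [seq [seq (fun x => e (xjf n0 x j)) | e <- E0 F k n0 ((l + k.+1 - j) %% k.+1)%N]
          | j <- iota 0 k.+1].

Lemma CBE (F : finFieldType) n k (l : 'I_k.+1) x :
  @constructionB F n k l x = [seq e x | e <- EB F n k (n %/ k.+1) l].
Proof.
rewrite /constructionB /EB map_flatten -map_comp; congr flatten.
by apply: eq_map => j /=; rewrite C0E -map_comp.
Qed.

Lemma linN_E0 (F : fieldType) k n0 l i : linN (nth (fun _ => 0) (E0 F k n0 l) i).
Proof.
rewrite /E0; case: ifP => _.
  case: (ltnP i (size [seq i <- iota 0 n0 | ~~ ((l * (n0 %/ k) <= i) && (i < l.+1 * (n0 %/ k)))%N])) => iE.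
    by rewrite (nth_map 0%N) // => a g1 g2 g H.
  by rewrite nth_default ?size_map // => a g1 g2 g H; rewrite mulr0 addr0.
case: (ltnP i (size (iota 0 (n0 %/ k)))) => iE.
  rewrite (nth_map 0%N) // => a g1 g2 g H.
  by rewrite mulr_sumr -big_split; apply: eq_bigr => t _; rewrite H.
by rewrite nth_default ?size_map // => a g1 g2 g H; rewrite mulr0 addr0.
Qed.

Lemma rv2seq_ord (F : fieldType) n (x : 'rV[F]_n) (i : 'I_n) :
  (rv2seq x)`_i = x ord0 i.
Proof.
rewrite /rv2seq (nth_map i) ?size_enum_ord //; congr (x ord0 _).
by apply: val_inj; rewrite /= nth_enum_ord.
Qed.

Lemma rv2seq_lin (F : fieldType) n a (x y : 'rV[F]_n) u :
  (rv2seq (a *: x + y))`_u = a * (rv2seq x)`_u + (rv2seq y)`_u.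
Proof.
case: (ltnP u n) => un.
  by rewrite -[u]/(nat_of_ord (Ordinal un)) !rv2seq_ord !mxE.
by rewrite /rv2seq !nth_default ?size_map -?enumT ?size_enum_ord // ?mulr0 ?addr0.
Qed.

Lemma xjf_lin (F : fieldType) n n0 j a (x y : 'rV[F]_n) u :
  xjf n0 (a *: x + y) j u = a * xjf n0 x j u + xjf n0 y j u.
Proof.
rewrite /xjf; case: (ltnP u n0) => un.
  by rewrite !(nth_map 0%N) ?size_iota // rv2seq_lin.
by rewrite !nth_default ?size_map ?size_iota // mulr0 addr0.
Qed.

Lemma allLin_EB (F : fieldType) n k n0 l : allLin (EB F n k n0 l).
Proof.
apply: allLin_flatten => j; apply: allLin_map => [i|a x y u]; first exact: linN_E0.
exact: xjf_lin.
Qed.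

Lemma cnt_all (P : pred nat) r : (forall i, i \in r -> P i) -> count P r = size r.
Proof. by move=> H; rewrite -count_predT; apply: eq_in_count => i /H ->. Qed.

Lemma cnt_none (P : pred nat) r : (forall i, i \in r -> ~~ P i) -> count P r = 0%N.
Proof. by move=> H; rewrite -(count_pred0 r); apply: eq_in_count => i /H /negbTE ->. Qed.

Lemma count_range k m s : (s < k)%N ->
  count (fun i => ~~ ((s * m <= i) && (i < s.+1 * m)))%N (iota 0 (k * m)) = (k * m - m)%N.
Proof.
move=> sk.
have e : (k * m = s * m + (m + (k - s.+1) * m))%N.
  rewrite -{1}(subnKC sk) mulnDl mulSn; lia.
rewrite e !iotaD !count_cat add0n.
rewrite cnt_all; last by move=> i; rewrite mem_iota; lia.
rewrite cnt_none; last by move=> i; rewrite mem_iota negbK; lia.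
rewrite cnt_all; last by move=> i; rewrite mem_iota; lia.
rewrite !size_iota; lia.
Qed.

Lemma size_E0 (F : fieldType) k m s : (0 < k)%N ->
  size (E0 F k (k * m) s) = if (s < k)%N then (k * m - m)%N else m.
Proof.
move=> k0; rewrite /E0 mulKn //; case: ifP => sk.
  by rewrite size_map size_filter count_range.
by rewrite size_map size_iota.
Qed.

Lemma mod2 a d : (a < d + d)%N -> (a %% d = if a < d then a else a - d)%N.
Proof.
move=> h; case: ltnP => ad; first exact: modn_small.
rewrite -{1}(subnK ad) modnDr modn_small //; lia.
Qed.

Lemma sidx_lt k l j : ((l + k.+1 - j) %% k.+1 < k.+1)%N.
Proof. exact: ltn_pmod. Qed.

Lemma sidx_inj k (l j1 j2 : nat) : (l < k.+1)%N -> (j1 < k.+1)%N -> (j2 < k.+1)%N ->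
  ((l + k.+1 - j1) %% k.+1 = (l + k.+1 - j2) %% k.+1)%N -> j1 = j2.
Proof.
move=> lk j1k j2k; rewrite !mod2; try lia.
by case: ifP; case: ifP; lia.
Qed.

Lemma sidx_injl k (l1 l2 j : nat) : (l1 < k.+1)%N -> (l2 < k.+1)%N -> (j < k.+1)%N ->
  ((l1 + k.+1 - j) %% k.+1 = (l2 + k.+1 - j) %% k.+1)%N -> l1 = l2.
Proof.
move=> lk j1k j2k; rewrite !mod2; try lia.
by case: ifP; case: ifP; lia.
Qed.

Lemma size_EB (F : fieldType) n k m (l : 'I_k.+1) : (0 < k)%N ->
  size (EB F n k (k * m) l) = (k * (k * m - m) + m)%N.
Proof.
move=> k0; rewrite /EB size_flatten /shape -map_comp sumnE big_map.
rewrite -[iota 0 k.+1]/(index_iota 0 k.+1) big_mkord.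
pose h (j : 'I_k.+1) : 'I_k.+1 := Ordinal (sidx_lt k l j).
have hinj : injective h.
  move=> j1 j2 /(congr1 val) /= E; apply: val_inj.
  exact: (sidx_inj (ltn_ord l) (ltn_ord j1) (ltn_ord j2) E).
under eq_bigr => j _ do rewrite /= size_map.
rewrite -[X in (X = _)%N]/(\sum_(j < k.+1) size (E0 F k (k * m) (h j))).
rewrite -(reindex_inj (P := predT) (F := fun j : 'I_k.+1 => size (E0 F k (k * m) j)) hinj) /=.
rewrite big_ord_recr /= size_E0 // ltnn.
rewrite (eq_bigr (fun _ => (k * m - m)%N)); last by move=> i _; rewrite size_E0 // ltn_ord.
by rewrite sum_nat_const card_ord.
Qed.

Lemma found_EB (F : fieldType) n k m (l j : nat) (v : 'rV[F]_n -> F) i :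
  (j < k.+1)%N -> (i < size (E0 F k (k * m) ((l + k.+1 - j) %% k.+1)))%N ->
  (forall x, nth (fun _ => 0) (E0 F k (k * m) ((l + k.+1 - j) %% k.+1)) i (xjf (k * m) x j) = v x) ->
  found (EB F n k (k * m) l) v.
Proof.
move=> jk iE H; rewrite /EB.
have -> : iota 0 k.+1 = iota 0 j ++ j :: iota j.+1 (k - j).
  have e : k.+1 = (j + (k - j).+1)%N by lia.
  by rewrite {1}e iotaD.
rewrite map_cat flatten_cat /=.
apply: found_cat_r; apply: found_cat_l.
apply: (found_map (a0 := fun _ => 0) (i := i) iE) => x; exact: H.
Qed.

Lemma found_pos (F : fieldType) n k m (l j u : nat) :
  (0 < k)%N -> (j < k.+1)%N -> ((l + k.+1 - j) %% k.+1 < k)%N -> (u < k * m)%N ->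
  ~~ ((((l + k.+1 - j) %% k.+1) * m <= u) && (u < ((l + k.+1 - j) %% k.+1).+1 * m))%N ->
  found (EB F n k (k * m) l) (fun x => xjf (k * m) x j u).
Proof.
move=> k0 jk sk uk hu.
set s := ((l + k.+1 - j) %% k.+1)%N in sk hu *.
set fl := [seq i <- iota 0 (k * m) | ~~ ((s * m <= i) && (i < s.+1 * m))%N].
have uin : u \in fl by rewrite mem_filter hu mem_iota.
apply: (@found_EB F n k m l j _ (index u fl) jk).
  by rewrite /E0 mulKn // sk size_map index_mem.
move=> x; rewrite /E0 mulKn // sk -/fl (nth_map 0%N) ?index_mem //.
by rewrite nth_index.
Qed.

Lemma found_sum (F : fieldType) n k m (l j r : nat) :
  (0 < k)%N -> (j < k.+1)%N -> ((l + k.+1 - j) %% k.+1 = k)%N -> (r < m)%N ->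
  found (EB F n k (k * m) l) (fun x => \sum_(t < k) xjf (k * m) x j (t * m + r)%N).
Proof.
move=> k0 jk sk rm.
apply: (@found_EB F n k m l j _ r jk).
  by rewrite /E0 mulKn // sk ltnn size_map size_iota.
move=> x; rewrite /E0 mulKn // sk ltnn (nth_map 0%N) ?size_iota //.
by rewrite nth_iota.
Qed.

Definition Pserve (F : finFieldType) n k L (q : 'I_n) (S : {set 'I_k.+1}) :=
  exists c : 'I_k.+1 -> nat -> F, forall x : 'rV[F]_n,
    x ord0 q = \sum_(l in S) \sum_(i < L) c l i * (@constructionB F n k l x)`_i.

Lemma P_mono (F : finFieldType) n k L q (S S' : {set 'I_k.+1}) :
  @Pserve F n k L q S -> S \subset S' -> @Pserve F n k L q S'.
Proof.
case=> c Hc sub; exists (fun l i => if l \in S then c l i else 0) => x.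
rewrite Hc [RHS](bigID (fun l => l \in S)) /=.
rewrite [X in _ = _ + X]big1 ?addr0; last first.
  by move=> l /andP [_ /negbTE ->]; apply: big1 => i _; rewrite mul0r.
rewrite [RHS](eq_bigl (fun l => l \in S)); last first.
  by move=> l; apply/andP/idP => [[] //|lS]; split => //; apply: (subsetP sub).
by apply: eq_bigr => l ->.
Qed.

Lemma Comb_opp (F : fieldType) (T : Type) (E : seq (T -> F)) v :
  Comb E v -> Comb E (fun x => - v x).
Proof.
case=> w H; exists (fun i => - w i) => x; rewrite H -sumrN.
by apply: eq_bigr => i _; rewrite mulNr.
Qed.

Lemma P_single (F : finFieldType) n k L (q : 'I_n) (l : 'I_k.+1) :
  size (EB F n k (n %/ k.+1) l) = L ->
  Comb (EB F n k (n %/ k.+1) l) (fun x : 'rV[F]_n => x ord0 q) -> @Pserve F n k L q [set l].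
Proof.
move=> sz [w Hw]; exists (fun _ i => w i) => x.
rewrite big_set1 Hw sz; apply: eq_bigr => i _.
by rewrite CBE nth_map_app.
Qed.

Lemma P_pair (F : finFieldType) n k L (q : 'I_n) (l1 l2 : 'I_k.+1) v1 v2 :
  l1 != l2 ->
  size (EB F n k (n %/ k.+1) l1) = L -> size (EB F n k (n %/ k.+1) l2) = L ->
  Comb (EB F n k (n %/ k.+1) l1) v1 -> Comb (EB F n k (n %/ k.+1) l2) v2 ->
  (forall x : 'rV[F]_n, x ord0 q = v1 x + v2 x) -> @Pserve F n k L q [set l1; l2].
Proof.
move=> l12 sz1 sz2 [w1 H1] [w2 H2] H.
exists (fun l i => if l == l1 then w1 i else w2 i) => x.
rewrite big_setU1 /=; last by rewrite inE.
rewrite big_set1 eqxx eq_sym (negbTE l12) H H1 H2 sz1 sz2.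
by congr (_ + _); apply: eq_bigr => i _; rewrite CBE nth_map_app.
Qed.

Lemma found_ext (F : fieldType) (T : Type) (E : seq (T -> F)) v v' :
  found E v -> (forall x, v x = v' x) -> found E v'.
Proof. by case=> i iE H H'; exists i => // x; rewrite H. Qed.

Lemma range_eq m s t r : (0 < m)%N -> (r < m)%N ->
  (s * m <= t * m + r)%N -> (t * m + r < s.+1 * m)%N -> t = s.
Proof.
move=> m0 rm h1 h2.
have a : (t * m < s.+1 * m)%N by apply: leq_ltn_trans h2; apply: leq_addr.
have b : (s * m < t.+1 * m)%N by apply: (leq_ltn_trans h1); rewrite mulSn addnC ltn_add2r.
rewrite ltn_pmul2r // in a; rewrite ltn_pmul2r // in b.
lia.
Qed.

Definition sidx k (l j : nat) := ((l + k.+1 - j) %% k.+1)%N.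

Lemma sidx_of k J t : (J < k.+1)%N -> (t < k.+1)%N -> sidx k ((J + t) %% k.+1) J = t.
Proof.
move=> Jk tk; rewrite /sidx (mod2 (a := (J + t)%N)); last by lia.
case: ifP => h; rewrite mod2; try lia; case: ifP; lia.
Qed.

Lemma xq_eq (F : fieldType) n k m (q : 'I_n) (x : 'rV[F]_n) : (0 < k * m)%N ->
  xjf (k * m) x (q %/ (k * m)) (q %% (k * m)) = x ord0 q.
Proof.
move=> km; rewrite /xjf (nth_map 0%N) ?size_iota ?ltn_pmod // nth_iota ?ltn_pmod //.
by rewrite add0n -divn_eq rv2seq_ord.
Qed.

Lemma q_split n k m (q : 'I_n) : n = (k * m * k.+1)%N -> (0 < m)%N -> (0 < k)%N ->
  [/\ (q %/ (k * m) < k.+1)%N, (q %% (k * m) < k * m)%N,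
      ((q %% (k * m)) %/ m < k)%N, ((q %% (k * m)) %% m < m)%N &
      (q %% (k * m) = (q %% (k * m)) %/ m * m + (q %% (k * m)) %% m)%N].
Proof.
move=> hn m0 k0; have km : (0 < k * m)%N by rewrite muln_gt0 k0.
have qn := ltn_ord q; rewrite {2}hn in qn.
split.
- by rewrite ltn_divLR // mulnC.
- by rewrite ltn_pmod.
- by rewrite ltn_divLR // ltn_pmod.
- by rewrite ltn_pmod.
- exact: divn_eq.
Qed.

Definition goodq k m (q : nat) (l : nat) :=
  ((sidx k l (q %/ (k * m)) != (q %% (k * m)) %/ m) && (sidx k l (q %/ (k * m)) != k))%N.

Lemma req_single (F : finFieldType) n k m L (q : 'I_n) (l : 'I_k.+1) :
  (0 < k)%N -> (0 < m)%N -> n = (k * m * k.+1)%N -> L = (k * (k * m - m) + m)%N ->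
  goodq k m q l -> @Pserve F n k L q [set l].
Proof.
move=> k0 m0 hn hL /andP [g1 g2].
have hn0 : (n %/ k.+1 = k * m)%N by rewrite hn mulnK.
have km : (0 < k * m)%N by rewrite muln_gt0 k0.
have [Jk pk tk rm pe] := q_split q hn m0 k0.
apply: P_single; first by rewrite hn0 size_EB.
rewrite hn0; apply: found_Comb.
apply: (found_ext (v := fun x => xjf (k * m) x (q %/ (k * m)) (q %% (k * m)))).
  apply: found_pos => //.
    by have := sidx_lt k l (q %/ (k * m)); rewrite /sidx in g2 *; lia.
  apply/negP => /andP [h1 h2]; move: g1; rewrite /sidx.
  rewrite pe in h1 h2.
  by rewrite (range_eq m0 rm h1 h2) eqxx.
by move=> x; rewrite xq_eq.
Qed.

Lemma req_pairbad (F : finFieldType) n k m L (q : 'I_n) (la lb : 'I_k.+1) :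
  (0 < k)%N -> (0 < m)%N -> n = (k * m * k.+1)%N -> L = (k * (k * m - m) + m)%N ->
  la != lb ->
  (sidx k la (q %/ (k * m)) = (q %% (k * m)) %/ m)%N ->
  (sidx k lb (q %/ (k * m)) = k)%N ->
  @Pserve F n k L q [set la; lb].
Proof.
move=> k0 m0 hn hL lab sa sb.
have hn0 : (n %/ k.+1 = k * m)%N by rewrite hn mulnK.
have km : (0 < k * m)%N by rewrite muln_gt0 k0.
have [Jk pk tk rm pe] := q_split q hn m0 k0.
set J := (q %/ (k * m))%N in Jk sa sb.
set t := ((q %% (k * m)) %/ m)%N in tk pe sa.
set r := ((q %% (k * m)) %% m)%N in rm pe.
pose f (t' : 'I_k) (x : 'rV[F]_n) := xjf (k * m) x J (t' * m + r)%N.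
pose t0 : 'I_k := Ordinal tk.
apply: (@P_pair F n k L q la lb
   (fun x => - \big[+%R/0]_(t' <- index_enum 'I_k | t' != t0) f t' x)
   (fun x => \sum_(t' < k) f t' x)) => //; rewrite ?hn0 ?size_EB //.
- apply: Comb_opp; apply: Comb_sum => t' nt.
  apply: found_Comb; apply: found_pos => //.
  + by move: sa; rewrite /sidx => ->.
  + apply: (@leq_trans (t'.+1 * m)%N); first by rewrite mulSn; lia.
    by rewrite leq_mul2r ltn_ord orbT.
  + apply/negP => /andP [h1 h2]; move: sa; rewrite /sidx => sa.
    rewrite sa in h1 h2; move: nt; rewrite -val_eqE /= (range_eq m0 rm h1 h2) eqxx.
    by [].
- apply: found_Comb; apply: found_sum => //.
- move=> x; rewrite [\sum_(t' < k) f t' x](bigD1 t0) //= addrCA addNr addr0 /f /= -pe /J.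
  by rewrite xq_eq.
Qed.

Lemma req_pair (F : finFieldType) n k m L (q : 'I_n) (l1 l2 : 'I_k.+1) :
  (0 < k)%N -> (0 < m)%N -> n = (k * m * k.+1)%N -> L = (k * (k * m - m) + m)%N ->
  l1 != l2 -> @Pserve F n k L q [set l1; l2].
Proof.
move=> k0 m0 hn hL l12.
case g1: (goodq k m q l1).
  apply: (P_mono (S := [set l1])); first exact: (@req_single F n k m L q l1 k0 m0 hn hL g1).
  by apply/subsetP => y; rewrite !inE => ->.
case g2: (goodq k m q l2).
  apply: (P_mono (S := [set l2])); first exact: (@req_single F n k m L q l2 k0 m0 hn hL g2).
  by apply/subsetP => y; rewrite !inE => ->; rewrite orbT.
have [Jk pk tk rm pe] := q_split q hn m0 k0.
have inj : sidx k l1 (q %/ (k * m)) = sidx k l2 (q %/ (k * m)) -> l1 = l2.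
  move=> E; apply: val_inj; exact: (sidx_injl (ltn_ord l1) (ltn_ord l2) Jk E).
move/negbT: g1; move/negbT: g2; rewrite /goodq !negb_and !negbK.
move=> /orP [/eqP a2|/eqP a2] /orP [/eqP a1|/eqP a1].
- by move: l12; rewrite (inj (etrans a1 (esym a2))) eqxx.
- rewrite setUC; apply: (@req_pairbad F n k m L q l2 l1) => //; by rewrite eq_sym.
- exact: (@req_pairbad F n k m L q l1 l2).
- by move: l12; rewrite (inj (etrans a1 (esym a2))) eqxx.
Qed.

Lemma req_bad n k m (q : 'I_n) :
  (0 < k)%N -> (0 < m)%N -> n = (k * m * k.+1)%N ->
  exists b1 b2 : 'I_k.+1, forall l : 'I_k.+1, ~~ goodq k m q l -> l = b1 \/ l = b2.
Proof.
move=> k0 m0 hn.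
have [Jk pk tk rm pe] := q_split q hn m0 k0.
set J := (q %/ (k * m))%N in Jk pe *.
set t := ((q %% (k * m)) %/ m)%N in tk pe *.
exists (Ordinal (sidx_lt k (J + t) 0)), (Ordinal (sidx_lt k (J + k) 0)) => l.
have e1 : forall u, (u < k.+1)%N -> ((J + u + k.+1 - 0) %% k.+1)%N = ((J + u) %% k.+1)%N.
  by move=> u _; rewrite subn0 modnDr.
rewrite /goodq -/J -/t negb_and !negbK => /orP [/eqP a|/eqP a]; [left|right];
  apply: val_inj => /=; rewrite e1 //; try lia.
- apply: (sidx_injl (ltn_ord l) _ Jk); first by rewrite ltn_pmod.
  by rewrite -/(sidx k l J) -/(sidx k ((J + t) %% k.+1) J) a sidx_of //; lia.
- apply: (sidx_injl (ltn_ord l) _ Jk); first by rewrite ltn_pmod.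
  by rewrite -/(sidx k l J) -/(sidx k ((J + k) %% k.+1) J) a sidx_of //; lia.
Qed.

From Stdlib Require Import IndefiniteDescription.
Unset Implicit Arguments.
Import Num.Theory.

Theorem theorem4p4 (F : finFieldType) (n k N L : nat) :
  (0 < n)%N -> (0 < k)%N -> (k * k.+1 %| n)%N ->
  (N%:R : rat) = (k%:R - 1 + k%:R^-1) * n%:R ->
  (L%:R : rat) = (k%:R - 1 + k%:R^-1) * (n%:R / k.+1%:R) ->
  is_uniform_BAC N k (fun _ : 'I_k.+1 => L) (@constructionB F n k).
Proof.
move=> n0 k0 hdiv hN hL.
set m := (n %/ (k * k.+1))%N.
have hn : n = (k * m * k.+1)%N by rewrite /m; move: (divnK hdiv); set d := (n %/ _)%N; nia.
have m0 : (0 < m)%N by move: n0; rewrite hn !muln_gt0 => /andP [/andP [_ ->]].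
have hn0 : (n %/ k.+1 = k * m)%N by rewrite hn mulnK.
have kR : (k%:R : rat) != 0 by rewrite pnatr_eq0 -lt0n.
have k1R : (k.+1%:R : rat) != 0 by rewrite pnatr_eq0.
have hmk : (m <= k * m)%N by rewrite leq_pmull.
have HL : L = (k * (k * m - m) + m)%N.
  apply/eqP; rewrite -(eqr_nat rat) hL hn natrM mulfK // !(natrM, natrD) natrB //.
  rewrite natrM; apply/eqP; field; exact: kR.
have HN : N = (k.+1 * L)%N.
  apply/eqP; rewrite -(eqr_nat rat) hN HL hn !(natrM, natrD) natrB // natrM.
  apply/eqP; field; exact: kR.
split => //; split.
- by move=> l x; rewrite CBE size_map hn0 size_EB.
- by move=> l; rewrite HL ltn_addl.
- by rewrite sum_nat_const card_ord HN.
- by move=> l a x y i; rewrite !CBE !nth_map_app; apply: allLin_EB.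
move=> req.
have [R [surj HP]] := @comb_assign k (fun j S => @Pserve F n k L (req j) S)
   (fun j l => goodq k m (req j) l) k0
   (fun j S S' H sub => P_mono H sub)
   (fun j l g => @req_single F n k m L (req j) l k0 m0 hn HL g)
   (fun j l1 l2 h => @req_pair F n k m L (req j) l1 l2 k0 m0 hn HL h)
   (fun j => @req_bad n k m (req j) k0 m0 hn).
exists R; split => //.
pose c j := proj1_sig (constructive_indefinite_description _ (HP j)).
have Hc : forall j (x : 'rV[F]_n), x ord0 (req j) = \sum_(l in [set l | R l == j]) \sum_(i < L) c j l i * (@constructionB F n k l x)`_i.
  by move=> j; exact: (proj2_sig (constructive_indefinite_description _ (HP j))).
exists (fun _ => 1), (fun l i => c (R l) l i) => x j.
rewrite Hc; apply: eq_big => [l|l]; first by rewrite inE.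
rewrite inE => /eqP Rl.
by rewrite mul1r Rl.
Qed.
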